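(* Let $2 \le m < 50$. In every Nash equilibrium of the imbalanced $(m,3)$-RPS, at least two players choose mixed strategies that assign positive probability to the object $S$.
   Context: An $(m,n)$-RPS game is a symmetric, zero-sum, win/lose game with $m$ players and $n$ pure strategies (''objects''), played without collusion; each player independently chooses an object (mixed strategies are allowed, Nash equilibria are in mixed strategies). The rules assign to every multiset $c$ of $m$ chosen objects a single winning object $\phi(c)\in c$; every player who chose $\phi(c)$ wins and every other player loses. If there are $m'$ winners, each winner receives payoff $\frac{m-m'}{m'}$ and each loser receives payoff $-1$. The imbalanced $(m,3)$-RPS has objects $R,P,S$ with the following rules: any multiset containing at least one $S$ and at least one $R$ is won by $R$; any multiset containing only $R$'s and $P$'s (with at least one of each) is won by $P$; any multiset containing only $P$'s and $S$'s (with at least one of each) is won by $S$; a multiset consisting of a single object type is won by that object. *)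

(* Defs.v *)
From HB Require Import structures.
From mathcomp Require Import all_boot all_order all_algebra.
From mathcomp Require Import reals.
Set Implicit Arguments. Unset Strict Implicit. Unset Printing Implicit Defensive.
Import Order.TTheory GRing.Theory Num.Theory.
Local Open Scope ring_scope.

Inductive obj := oR | oP | oS.

Definition obj2o (x : obj) : 'I_3 :=
  match x with oR => inord 0 | oP => inord 1 | oS => inord 2 end.
Definition o2obj (i : 'I_3) : obj :=
  match val i with 0%N => oR | 1%N => oP | _ => oS end.
Lemma obj2oK : cancel obj2o o2obj.
Proof. by case; rewrite /o2obj /= inordK. Qed.
HB.instance Definition _ := Finite.copy obj (can_type obj2oK).

Definition profile (m : nat) := {ffun 'I_m -> obj}.

Definition present m (c : profile m) (x : obj) : bool := [exists i, c i == x].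

Definition winner m (c : profile m) : obj :=
  let hR := present c oR in let hP := present c oP in let hS := present c oS in
  if hR && hS then oR
  else if hR && hP then oP
  else if hP && hS then oS
  else if hR then oR else if hP then oP else oS.

Definition nwinners m (c : profile m) : nat := #|[set j | c j == winner c]|.

Definition payoff (R : realType) m (i : 'I_m) (c : profile m) : R :=
  if c i == winner c then ((m%:R - (nwinners c)%:R) / (nwinners c)%:R)
  else -1.

Definition is_mixed (R : realType) (s : obj -> R) : Prop :=
  (forall x, 0 <= s x) /\ \sum_(x : obj) s x = 1.

Definition exp_payoff (R : realType) m (sigma : 'I_m -> obj -> R) (i : 'I_m) : R :=
  \sum_(c : profile m) (\prod_(j < m) sigma j (c j)) * payoff R i c.

Definition deviate (R : realType) m (sigma : 'I_m -> obj -> R) (i : 'I_m)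
  (tau : obj -> R) : 'I_m -> obj -> R :=
  fun j => if j == i then tau else sigma j.

Definition is_NE (R : realType) m (sigma : 'I_m -> obj -> R) : Prop :=
  (forall i, is_mixed (sigma i)) /\
  forall i (tau : obj -> R), is_mixed tau ->
    exp_payoff (deviate sigma i tau) i <= exp_payoff sigma i.

(* Main.v *)
Require Import Defs.
From HB Require Import structures.
From mathcomp Require Import all_boot all_order all_algebra.
From mathcomp Require Import reals ring lra.
Set Implicit Arguments. Unset Strict Implicit. Unset Printing Implicit Defensive.
Import Order.TTheory GRing.Theory Num.Theory.
Local Open Scope ring_scope.

(* Proof: zero-sum + deviation arguments. *)

Definition Ex (R : realType) m (G : 'I_m -> obj -> R) (f : profile m -> R) : R :=
  \sum_(c : profile m) (\prod_(j < m) G j (c j)) * f c.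

Definition pure (R : realType) (x : obj) : obj -> R := fun y => (y == x)%:R.

Definition mixedG (R : realType) m (G : 'I_m -> obj -> R) :=
  forall j, is_mixed (G j).

Definition oeq (x y : obj) := match x, y with oR,oR|oP,oP|oS,oS => true | _,_ => false end.
Lemma oeqE (x y : obj) : (x == y) = oeq x y.
Proof. by case: x; case: y; rewrite ?eqxx //=; apply/negbTE/eqP. Qed.
Lemma sum_obj (R : realType) (f : obj -> R) : \sum_x f x = f oR + f oP + f oS.
Proof.
rewrite (bigD1 oR) // (bigD1 oP) ?oeqE // (bigD1 oS) ?oeqE //.
rewrite big1; last by case; rewrite !oeqE.
by rewrite /= addr0 addrA.
Qed.

Lemma sum_ind (R : realType) (g : obj -> R) z : \sum_y g y * (y == z)%:R = g z.
Proof. by rewrite sum_obj !oeqE; case: z => /=; rewrite ?mulr0 ?mulr1 ?add0r ?addr0. Qed.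

Lemma pure_mixed (R : realType) x : is_mixed (pure R x).
Proof.
split; first by move=> y; rewrite /pure ler0n.
rewrite /pure sum_obj !oeqE; case: x => /=; rewrite ?add0r ?addr0 //.
Qed.

Lemma Ex_prod (R : realType) m (G : 'I_m -> obj -> R) (A : 'I_m -> obj -> R) :
  Ex G (fun c => \prod_j A j (c j)) = \prod_j \sum_y G j y * A j y.
Proof.
rewrite (bigA_distr_bigA (fun j y => G j y * A j y)) /Ex.
by apply: eq_bigr => c _; rewrite big_split.
Qed.

Lemma Ex_prodP (R : realType) m (G : 'I_m -> obj -> R) (P : pred 'I_m)
  (A : 'I_m -> obj -> R) : mixedG G ->
  Ex G (fun c => \prod_(j | P j) A j (c j)) = \prod_(j | P j) \sum_y G j y * A j y.
Proof.
move=> HG.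
have -> : Ex G (fun c : profile m => \prod_(j | P j) A j (c j)) =
          Ex G (fun c => \prod_j (if P j then A j (c j) else 1)).
  by rewrite /Ex; apply: eq_bigr => c _; congr (_ * _); rewrite big_mkcond.
rewrite (Ex_prod G (fun j y => if P j then A j y else 1)) [RHS]big_mkcond; apply: eq_bigr => j _.
case: (P j) => //.
by under eq_bigr do rewrite mulr1; case: (HG j).
Qed.

Lemma Ex_const (R : realType) m (G : 'I_m -> obj -> R) a : mixedG G ->
  Ex G (fun _ => a) = a.
Proof.
move=> HG.
have H1 := @Ex_prod R m G (fun _ _ => 1).
have E1 : \prod_j \sum_y G j y * 1 = 1.
  by apply: big1 => j _; under eq_bigr do rewrite mulr1; case: (HG j).
rewrite /Ex in H1; rewrite /Ex -mulr_suml.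
have -> : \sum_(c : profile m) \prod_(j < m) G j (c j) = 1.
  rewrite -[RHS]E1 -H1; apply: eq_bigr => c _; by rewrite big1_eq mulr1.
by rewrite mul1r.
Qed.

Lemma Ex_add (R : realType) m (G : 'I_m -> obj -> R) f g :
  Ex G (fun c => f c + g c) = Ex G f + Ex G g.
Proof. by rewrite /Ex -big_split; apply: eq_bigr => c _; rewrite mulrDr. Qed.

Lemma Ex_scale (R : realType) m (G : 'I_m -> obj -> R) a f :
  Ex G (fun c => a * f c) = a * Ex G f.
Proof. by rewrite /Ex mulr_sumr; apply: eq_bigr => c _; rewrite mulrCA. Qed.

Lemma Ex_sum (R : realType) m (G : 'I_m -> obj -> R) (P : pred 'I_m) f :
  Ex G (fun c => \sum_(l | P l) f l c) = \sum_(l | P l) Ex G (f l).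
Proof.
rewrite /Ex exchange_big; apply: eq_bigr => c _; by rewrite mulr_sumr.
Qed.

Lemma Ex_mono (R : realType) m (G : 'I_m -> obj -> R) (f g : profile m -> R) :
  (forall j y, 0 <= G j y) ->
  (forall c : profile m, (forall j, 0 < G j (c j)) -> f c <= g c) -> Ex G f <= Ex G g.
Proof.
move=> HG Hfg; apply: ler_sum => c _.
case: (boolP [forall j, 0 < G j (c j)]) => [/forallP H|].
  by apply: ler_wpM2l; [apply: prodr_ge0 => j _; exact: HG | exact: Hfg].
rewrite negb_forall => /existsP [j Hj].
have Hz : G j (c j) = 0.
  by apply/eqP; move: (HG j (c j)); rewrite le_eqVlt (negbTE Hj) orbF eq_sym.
by rewrite (bigD1 j) //= Hz !mul0r.
Qed.

Lemma Ex_ind (R : realType) m (G : 'I_m -> obj -> R) k y : mixedG G ->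
  Ex G (fun c => (c k == y)%:R) = G k y.
Proof.
move=> HG.
have := @Ex_prodP R m G (pred1 k) (fun _ z => (z == y)%:R) HG.
rewrite big_pred1_eq sum_ind => <-.
by apply: eq_bigr => c _; rewrite big_pred1_eq.
Qed.

Lemma Ex_indprod (R : realType) m (G : 'I_m -> obj -> R) k y (L : pred 'I_m) z :
  mixedG G -> ~~ L k ->
  Ex G (fun c => (c k == y)%:R * \prod_(l | L l) (c l == z)%:R) =
  G k y * \prod_(l | L l) G l z.
Proof.
move=> HG Lk.
have := @Ex_prodP R m G [pred l | (l == k) || L l]
  (fun l w => if l == k then (w == y)%:R else (w == z)%:R) HG.
rewrite (bigD1 k) /=; last by rewrite eqxx.
rewrite eqxx sum_ind.
have E : forall F : 'I_m -> R, \prod_(i | ((i == k) || L i) && (i != k)) F i = \prod_(i | L i) F i.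
  move=> F; apply: eq_bigl => i; case: (i =P k) => [->|/eqP ne].
    by rewrite (negbTE Lk).
  by rewrite andbT.
rewrite (E (fun i => \sum_y0 G i y0 * (if i == k then (y0 == y)%:R else (y0 == z)%:R))).
have E2 : \prod_(i | L i) \sum_y0 G i y0 * (if i == k then (y0 == y)%:R else (y0 == z)%:R)
   = \prod_(i | L i) G i z.
  apply: eq_bigr => i Li; have -> : (i == k) = false by apply/eqP => e; move: Lk; rewrite -e Li.
  by rewrite sum_ind.
rewrite E2.
move=> <-; apply: eq_bigr => c _.
congr (_ * _).
rewrite [in RHS](bigD1 k) /=; last by rewrite eqxx.
rewrite eqxx E; congr (_ * _); apply: eq_bigr => i Li.
by have -> : (i == k) = false by apply/eqP => e; move: Lk; rewrite -e Li.
Qed.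

Lemma Ex_pair (R : realType) m (G : 'I_m -> obj -> R) k y l z :
  mixedG G -> k != l ->
  Ex G (fun c => (c k == y)%:R * (c l == z)%:R) = G k y * G l z.
Proof.
move=> HG kl.
have := @Ex_indprod R m G k y (pred1 l) z HG kl; rewrite big_pred1_eq => <-.
by apply: eq_bigr => c _; rewrite big_pred1_eq.
Qed.

Definition cnt m (c : profile m) (y : obj) : nat := #|[set j | c j == y]|.

Lemma cntE (R : realType) m (c : profile m) y :
  (cnt c y)%:R = \sum_j (c j == y)%:R :> R.
Proof.
rewrite /cnt -sum1_card natr_sum big_mkcond /=.
by apply: eq_bigr => j _; rewrite inE; case: (c j == y).
Qed.

Lemma cnt_le m (c : profile m) y : (cnt c y <= m)%N.
Proof. by rewrite /cnt (leq_trans (max_card _)) // card_ord. Qed.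

Lemma cnt_total (R : realType) m (c : profile m) :
  (cnt c oR)%:R + (cnt c oP)%:R + (cnt c oS)%:R = m%:R :> R.
Proof.
rewrite !cntE -!big_split /=.
rewrite (eq_bigr (fun _ => 1)); first by rewrite sumr_const card_ord.
by move=> j _; case: (c j); rewrite !oeqE /= ?addr0 ?add0r.
Qed.

Lemma obj_RP (x : obj) : x != oP -> x != oS -> x = oR.
Proof. by case: x; rewrite !oeqE. Qed.

Lemma presentI m (c : profile m) i x : c i = x -> present c x.
Proof. by move=> h; apply/existsP; exists i; rewrite h. Qed.

Lemma npresentI m (c : profile m) x : (forall l, c l != x) -> ~~ present c x.
Proof. by move=> h; apply/existsP => -[l]; rewrite (negbTE (h l)). Qed.

Lemma win_RS m (c : profile m) : present c oR -> present c oS -> winner c = oR.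
Proof. by rewrite /winner => -> ->. Qed.

Lemma win_noS_P m (c : profile m) : ~~ present c oS -> present c oP -> winner c = oP.
Proof.
move=> hS hP; rewrite /winner (negbTE hS) hP !andbF andbT.
by case: (present c oR).
Qed.

Lemma win_noR_S m (c : profile m) : ~~ present c oR -> present c oS -> winner c = oS.
Proof.
move=> hR hS; rewrite /winner (negbTE hR) hS /= andbT.
by case: (present c oP).
Qed.

Lemma win_Ronly m (c : profile m) :
  present c oR -> ~~ present c oP -> ~~ present c oS -> winner c = oR.
Proof. by move=> hR hP hS; rewrite /winner hR (negbTE hP) (negbTE hS). Qed.

Lemma pay_win (R : realType) m (i : 'I_m) (c : profile m) : c i = winner c ->
  payoff R i c = (m%:R - (cnt c (winner c))%:R) / (cnt c (winner c))%:R.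
Proof. by rewrite /payoff => ->; rewrite eqxx. Qed.

Lemma pay_lose (R : realType) m (i : 'I_m) (c : profile m) : c i != winner c ->
  payoff R i c = -1.
Proof. by rewrite /payoff => /negbTE ->. Qed.

Lemma pay_ge (R : realType) m (i : 'I_m) (c : profile m) : -1 <= payoff R i c.
Proof.
rewrite /payoff; case: ifP => _ //.
have : 0 <= (m%:R - (nwinners c)%:R) / (nwinners c)%:R :> R.
  apply: divr_ge0 => //; rewrite subr_ge0 ler_nat; exact: cnt_le.
lra.
Qed.

Lemma cnt_single m (c : profile m) i y :
  c i = y -> (forall l, l != i -> c l != y) -> cnt c y = 1%N.
Proof.
move=> ci h; rewrite /cnt -(cards1 i); apply: eq_card => l; rewrite !inE.
case: (l =P i) => [->|/eqP ne]; first by rewrite ci eqxx.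
by rewrite (negbTE (h l ne)).
Qed.

Lemma cnt_two m (c : profile m) i j y : i != j ->
  c i = y -> c j = y -> (forall l, l != i -> l != j -> c l != y) -> cnt c y = 2%N.
Proof.
move=> ij ci cj h; rewrite /cnt; transitivity #|[set i; j]|; last by rewrite cards2 ij.
apply: eq_card => l.
rewrite !inE.
case: (l =P i) => [->|/eqP ne]; first by rewrite ci eqxx.
case: (l =P j) => [->|/eqP ne2]; first by rewrite cj eqxx.
by rewrite (negbTE (h l ne ne2)).
Qed.

Lemma pw_S (R : realType) m (i : 'I_m) (c : profile m) :
  c i = oS -> (forall l, l != i -> c l != oS) ->
  payoff R i c = m%:R * \prod_(l | l != i) (c l == oP)%:R - 1.
Proof.
move=> ci hS.
case: (boolP [forall l, (l != i) ==> (c l == oP)]) => [/forallP H | ].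
  have -> : \prod_(l | l != i) (c l == oP)%:R = 1 :> R.
    by apply: big1 => l hl; have := H l; rewrite hl /= => ->.
  have hR : ~~ present c oR.
    apply: npresentI => l; case: (l =P i) => [->|/eqP ne]; first by rewrite ci oeqE.
    by have := H l; rewrite ne /= => /eqP ->; rewrite oeqE.
  have W : winner c = oS by apply: win_noR_S => //; exact: presentI ci.
  have C1 : cnt c oS = 1%N.
    apply: (cnt_single ci) => l ne; have := H l; rewrite ne /= => /eqP ->; by rewrite oeqE.
  by rewrite pay_win W ?ci // C1 divr1 mulr1.
rewrite negb_forall => /existsP [l]; rewrite negb_imply => /andP [ne hP].
have cl : c l = oR by apply: obj_RP => //; exact: hS.
rewrite (bigD1 l) //= cl oeqE /= mul0r mulr0 sub0r.
have W : winner c = oR by apply: win_RS; [exact: presentI cl | exact: presentI ci].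
by rewrite pay_lose // W ci oeqE.
Qed.

Lemma cnt0 m (c : profile m) y : ~~ present c y -> cnt c y = 0%N.
Proof.
move=> h; apply/eqP; rewrite cards_eq0; apply/eqP/setP => l; rewrite !inE.
by apply/negbTE/eqP => e; move: h; rewrite (presentI e).
Qed.

Lemma cnt_gt0 m (c : profile m) l y : c l = y -> (1 <= cnt c y)%N.
Proof. by move=> e; apply/card_gt0P; exists l; rewrite inE e. Qed.

Lemma pw_P_core (R : realType) m (i : 'I_m) (c : profile m) :
  c i = oP -> (forall l, c l != oS) ->
  [/\ payoff R i c = (cnt c oR)%:R / (cnt c oP)%:R,
      (cnt c oR)%:R + (cnt c oP)%:R = m%:R :> R & (1 <= cnt c oP)%N].
Proof.
move=> ci h.
have hS : ~~ present c oS by apply: npresentI.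
have W : winner c = oP by apply: win_noS_P => //; exact: presentI ci.
have tot := cnt_total R c; rewrite (cnt0 hS) addr0 in tot.
split => //; last exact: cnt_gt0 ci.
by rewrite pay_win W ?ci // -tot addrK.
Qed.

Lemma pw_P_a (R : realType) m (i : 'I_m) (c : profile m) : (2 <= m)%N ->
  c i = oP -> (forall l, c l != oS) ->
  (\sum_l (c l == oR)%:R) / (m%:R - 1) <= payoff R i c.
Proof.
move=> m2 ci h; have [-> tot kP] := pw_P_core R ci h.
rewrite -cntE.
have m1 : (1 < m%:R :> R) by rewrite ltr1n.
case: (posnP (cnt c oR)) => [-> | kR]; first by rewrite !mul0r.
have kR' : 1 <= (cnt c oR)%:R :> R by rewrite ler1n.
have kP' : 1 <= (cnt c oP)%:R :> R by rewrite ler1n.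
apply: ler_wpM2l; first by rewrite ler0n.
rewrite lef_pV2 ?posrE; lra.
Qed.

Lemma pw_P_b (R : realType) m (i : 'I_m) (c : profile m) : (2 <= m)%N ->
  c i = oP -> (forall l, c l != oS) ->
  (1 - \prod_(l | l != i) (c l == oP)%:R) / (m%:R - 1) <= payoff R i c.
Proof.
move=> m2 ci h; have [-> tot kP] := pw_P_core R ci h.
have m1 : (1 < m%:R :> R) by rewrite ltr1n.
have kP' : 1 <= (cnt c oP)%:R :> R by rewrite ler1n.
case: (boolP [forall l, (l != i) ==> (c l == oP)]) => [/forallP H | ].
  have -> : \prod_(l | l != i) (c l == oP)%:R = 1 :> R.
    by apply: big1 => l hl; have := H l; rewrite hl /= => ->.
  rewrite subrr mul0r; apply: divr_ge0; rewrite ler0n //.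
rewrite negb_forall => /existsP [l]; rewrite negb_imply => /andP [ne hP].
have cl : c l = oR by apply: obj_RP => //; exact: h.
rewrite (bigD1 l) //= cl oeqE /= mul0r subr0.
have kR' : 1 <= (cnt c oR)%:R :> R by rewrite ler1n; exact: cnt_gt0 cl.
apply: (@le_trans _ _ ((cnt c oR)%:R / (m%:R - 1))).
  by apply: ler_wpM2r => //; rewrite invr_ge0; lra.
apply: ler_wpM2l; first lra.
rewrite lef_pV2 ?posrE; lra.
Qed.

Lemma pw_R_i0 (R : realType) m (i : 'I_m) (c : profile m) :
  c i = oR -> (forall l, c l != oS) -> payoff R i c <= 0.
Proof.
move=> ci h.
have hS : ~~ present c oS by apply: npresentI.
case: (boolP (present c oP)) => hP.
  by rewrite pay_lose ?(win_noS_P hS hP) ?ci ?oeqE //; lra.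
have W : winner c = oR by apply: win_Ronly => //; exact: presentI ci.
have tot := cnt_total R c; rewrite (cnt0 hS) (cnt0 hP) !addr0 in tot.
by rewrite pay_win W ?ci // tot subrr mul0r.
Qed.

Lemma pw_S_j (R : realType) m (i0 j : 'I_m) (c : profile m) :
  j != i0 -> c j = oS -> (forall l, l != i0 -> l != j -> c l != oS) ->
  m%:R * (c i0 == oP)%:R * \prod_(l | (l != i0) && (l != j)) (c l == oP)%:R
  + (m%:R / 2) * (c i0 == oS)%:R * \prod_(l | (l != i0) && (l != j)) (c l == oP)%:R
  - 1 <= payoff R j c.
Proof.
move=> ji0 cj h.
have hge := pay_ge R j c.
case: (boolP [forall l, ((l != i0) && (l != j)) ==> (c l == oP)]) => [/forallP H | ].
  have -> : \prod_(l | (l != i0) && (l != j)) (c l == oP)%:R = 1 :> R.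
    by apply: big1 => l hl; have := H l; rewrite hl /= => ->.
  have Hl : forall l, l != i0 -> l != j -> c l = oP.
    by move=> l a b; have := H l; rewrite a b /= => /eqP.
  have hS : present c oS by exact: presentI cj.
  case E : (c i0).
  - rewrite !oeqE /=; lra.
  - have hR : ~~ present c oR.
      apply: npresentI => l; case: (l =P i0) => [->|/eqP a]; first by rewrite E oeqE.
      case: (l =P j) => [->|/eqP b]; first by rewrite cj oeqE.
      by rewrite Hl // oeqE.
    have W := win_noR_S hR hS.
    have C1 : cnt c oS = 1%N.
      apply: (cnt_single cj) => l b; case: (l =P i0) => [->|/eqP a]; first by rewrite E oeqE.
      by rewrite Hl // oeqE.
    rewrite pay_win W ?cj // C1 !oeqE /=; lra.
  - have hR : ~~ present c oR.
      apply: npresentI => l; case: (l =P i0) => [->|/eqP a]; first by rewrite E oeqE.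
      case: (l =P j) => [->|/eqP b]; first by rewrite cj oeqE.
      by rewrite Hl // oeqE.
    have W := win_noR_S hR hS.
    have C2 : cnt c oS = 2%N.
      apply: (cnt_two (j := j) _ E cj); first by rewrite eq_sym.
      by move=> l a b; rewrite Hl // oeqE.
    rewrite pay_win W ?cj // C2 !oeqE /=; lra.
rewrite negb_forall => /existsP [l]; rewrite negb_imply => /andP [ne hP].
rewrite (bigD1 l) //= (negbTE hP) !mul0r !mulr0; lra.
Qed.

Lemma pw_R_j (R : realType) m (i0 j : 'I_m) (c : profile m) (b0 : R) :
  0 < b0 -> j != i0 -> c j = oR -> (forall l, l != i0 -> c l != oS) ->
  (c i0 == oS)%:R * (m%:R * (2 / b0 - (\sum_(l | l != i0) (c l == oR)%:R) / b0^+2))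
  - 1 <= payoff R j c.
Proof.
move=> b0p ji0 cj h.
have hge := pay_ge R j c.
case: (boolP (c i0 == oS)) => [/eqP E|_]; last by rewrite mul0r; lra.
have W : winner c = oR by apply: win_RS; [exact: presentI cj| exact: presentI E].
have CB : (cnt c oR)%:R = \sum_(l | l != i0) (c l == oR)%:R :> R.
  by rewrite cntE (bigD1 i0) //= E oeqE /= add0r.
rewrite -CB pay_win W ?cj // mul1r.
have kR : 1 <= (cnt c oR)%:R :> R by rewrite ler1n; exact: cnt_gt0 cj.
set B := (cnt c oR)%:R in kR *.
have key : 1 / B - (2 / b0 - B / b0^+2) = (B - b0)^+2 / (B * b0^+2).
  by field; apply/andP; split; apply/eqP; lra.
have : 0 <= (B - b0)^+2 / (B * b0^+2).
  apply: divr_ge0; first exact: sqr_ge0.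
  by apply: mulr_ge0; [lra | exact: sqr_ge0].
rewrite -key => H.
have : m%:R * (2 / b0 - B / b0^+2) <= m%:R * (1 / B).
  by apply: ler_wpM2l; [exact: ler0n | lra].
have -> : (m%:R - B) / B = m%:R * (1/B) - 1 by field; apply/eqP; lra.
lra.
Qed.

Definition U (R : realType) m (s : 'I_m -> obj -> R) i x :=
  exp_payoff (deviate s i (pure R x)) i.

Lemma dev_mixed (R : realType) m (s : 'I_m -> obj -> R) i x :
  mixedG s -> mixedG (deviate s i (pure R x)).
Proof. by move=> hs j; rewrite /deviate; case: (j == i) => //; exact: pure_mixed. Qed.

Lemma prod_dev (R : realType) m (s : 'I_m -> obj -> R) i tau (c : profile m) :
  \prod_j deviate s i tau j (c j) = tau (c i) * \prod_(j | j != i) s j (c j).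
Proof.
rewrite (bigD1 i) //= /deviate eqxx; congr (_ * _).
by apply: eq_bigr => j /negbTE ->.
Qed.

Lemma dev_lin (R : realType) m (s : 'I_m -> obj -> R) i tau :
  exp_payoff (deviate s i tau) i = \sum_x tau x * U s i x.
Proof.
rewrite /U /exp_payoff.
under [RHS]eq_bigr do rewrite mulr_sumr.
rewrite exchange_big /=; apply: eq_bigr => c _.
rewrite prod_dev.
under [RHS]eq_bigr do rewrite prod_dev /pure.
have -> : \sum_x tau x * ((c i == x)%:R * \prod_(j | j != i) s j (c j) * payoff R i c)
   = (\sum_x tau x * (x == c i)%:R) * (\prod_(j | j != i) s j (c j) * payoff R i c).
  by rewrite mulr_suml; apply: eq_bigr => x _; rewrite eq_sym !mulrA.
by rewrite sum_ind mulrA.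
Qed.

Lemma v_eq (R : realType) m (s : 'I_m -> obj -> R) i :
  exp_payoff s i = \sum_x s i x * U s i x.
Proof.
rewrite -dev_lin; apply: eq_bigr => c _; congr (_ * _); apply: eq_bigr => j _.
by rewrite /deviate; case: eqP => // ->.
Qed.

Lemma U_le (R : realType) m (s : 'I_m -> obj -> R) i x :
  is_NE s -> U s i x <= exp_payoff s i.
Proof. by case=> _ H; apply: H; exact: pure_mixed. Qed.

Lemma supp (R : realType) m (s : 'I_m -> obj -> R) i x :
  is_NE s -> 0 < s i x -> U s i x = exp_payoff s i.
Proof.
move=> hNE hx; have [hmix _] := hNE; have [h0 h1] := hmix i.
have ve := v_eq s i; rewrite sum_obj in ve; rewrite sum_obj in h1.
have gR := U_le i oR hNE; have gP := U_le i oP hNE; have gS := U_le i oS hNE.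
set v := exp_payoff s i in ve gR gP gS *.
have tR : 0 <= s i oR * (v - U s i oR) by apply: mulr_ge0 => //; lra.
have tP : 0 <= s i oP * (v - U s i oP) by apply: mulr_ge0 => //; lra.
have tS : 0 <= s i oS * (v - U s i oS) by apply: mulr_ge0 => //; lra.
have tot : s i oR * (v - U s i oR) + s i oP * (v - U s i oP) + s i oS * (v - U s i oS) = 0.
  have -> : s i oR * (v - U s i oR) + s i oP * (v - U s i oP) + s i oS * (v - U s i oS)
    = v * (s i oR + s i oP + s i oS) - (s i oR * U s i oR + s i oP * U s i oP + s i oS * U s i oS)
    by ring.
  by rewrite h1 mulr1 -ve subrr.
have : s i x * (v - U s i x) = 0 by case: x hx; lra.
move/eqP; rewrite mulf_eq0 => /orP [/eqP e|]; first by move: hx; rewrite e ltxx.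
by rewrite subr_eq0 => /eqP.
Qed.

Lemma win_present m (c : profile m) : (0 < m)%N -> present c (winner c).
Proof.
move=> m0.
have : present c oR || present c oP || present c oS.
  have e := presentI (erefl (c (Ordinal m0))).
  by case: (c (Ordinal m0)) e => ->; rewrite ?orbT.
rewrite /winner.
by case hR: (present c oR); case hP: (present c oP); case hS: (present c oS).
Qed.

Lemma pay_sum (R : realType) m (c : profile m) : (0 < m)%N ->
  \sum_i payoff R i c = 0.
Proof.
move=> m0.
have [l /eqP hl] := existsP (win_present c m0).
set w := winner c in hl *.
have k1 : 1 <= (cnt c w)%:R :> R by rewrite ler1n; exact: cnt_gt0 hl.
pose a : R := (m%:R - (cnt c w)%:R) / (cnt c w)%:R.
have -> : \sum_i payoff R i c = \sum_i ((c i == w)%:R * (a + 1) - 1).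
  apply: eq_bigr => i _; case: (boolP (c i == w)) => h.
    by rewrite pay_win ?(eqP h) // -/w -/a mul1r addrK.
  by rewrite pay_lose // mul0r sub0r.
rewrite big_split /= -mulr_suml -cntE sumr_const card_ord.
rewrite /a; field; apply/eqP; lra.
Qed.

Lemma zero_sum (R : realType) m (s : 'I_m -> obj -> R) : (0 < m)%N ->
  \sum_i exp_payoff s i = 0.
Proof.
move=> m0; rewrite /exp_payoff exchange_big /=.
by apply: big1 => c _; rewrite -mulr_sumr pay_sum // mulr0.
Qed.

Lemma G_nonneg (R : realType) m (G : 'I_m -> obj -> R) : mixedG G -> forall j y, 0 <= G j y.
Proof. by move=> h j y; case: (h j) => h0 _; exact: h0. Qed.

Lemma Ex_ext (R : realType) m (G : 'I_m -> obj -> R) (f g : profile m -> R) :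
  (forall c : profile m, f c = g c) -> Ex G f = Ex G g.
Proof. by move=> h; apply: eq_bigr => c _; rewrite h. Qed.

Lemma Ex_eq (R : realType) m (G : 'I_m -> obj -> R) (f g : profile m -> R) : mixedG G ->
  (forall c : profile m, (forall j, 0 < G j (c j)) -> f c = g c) -> Ex G f = Ex G g.
Proof.
move=> hG h; apply/le_anti/andP; split; apply: Ex_mono; try exact: G_nonneg hG;
by move=> c hc; rewrite h.
Qed.

Lemma Ex_affine (R : realType) m (G : 'I_m -> obj -> R) a b f : mixedG G ->
  Ex G (fun c => a * f c + b) = a * Ex G f + b.
Proof.
move=> hG; rewrite (Ex_add G (fun c => a * f c) (fun _ => b)) Ex_scale Ex_const //.
Qed.

Lemma dev_other (R : realType) m (s : 'I_m -> obj -> R) i tau l :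
  l != i -> deviate s i tau l = s l.
Proof. by rewrite /deviate => /negbTE ->. Qed.

Lemma dev_self (R : realType) m (s : 'I_m -> obj -> R) i tau :
  deviate s i tau i = tau.
Proof. by rewrite /deviate eqxx. Qed.

Lemma supp_dev (R : realType) m (s : 'I_m -> obj -> R) i x (c : profile m) :
  (forall j, 0 < deviate s i (pure R x) j (c j)) ->
  c i = x /\ (forall l, l != i -> 0 < s l (c l)).
Proof.
move=> h; split.
  have := h i; rewrite dev_self /pure; case: eqP => // _; by rewrite ltxx.
by move=> l hl; have := h l; rewrite dev_other.
Qed.

Lemma noS_of (R : realType) m (s : 'I_m -> obj -> R) l (c : profile m) :
  s l oS = 0 -> 0 < s l (c l) -> c l != oS.
Proof. by move=> h0 hp; apply/eqP => e; move: hp; rewrite e h0 ltxx. Qed.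

Lemma prod_dev_other (R : realType) m (s : 'I_m -> obj -> R) i tau (P : pred 'I_m) y :
  (forall l, P l -> l != i) ->
  \prod_(l | P l) deviate s i tau l y = \prod_(l | P l) s l y.
Proof. by move=> h; apply: eq_bigr => l /h hl; rewrite dev_other. Qed.

Lemma U_Ex (R : realType) m (s : 'I_m -> obj -> R) i x :
  U s i x = Ex (deviate s i (pure R x)) (payoff R i).
Proof. by []. Qed.

Lemma U_S (R : realType) m (s : 'I_m -> obj -> R) i :
  mixedG s -> (forall l, l != i -> s l oS = 0) ->
  U s i oS = m%:R * \prod_(l | l != i) s l oP - 1.
Proof.
move=> hs h0.
have hG := dev_mixed i oS hs.
rewrite U_Ex.
rewrite (@Ex_eq R m _ (payoff R i) (fun c => m%:R * \prod_(l | l != i) (c l == oP)%:R + (-1)) hG);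
  last first.
  move=> c /supp_dev [ci hl]; apply: pw_S => // l ne.
  by apply: (noS_of (h0 l ne)); exact: hl.
rewrite Ex_affine // (@Ex_prodP R m _ (fun l => l != i) (fun _ y => (y == oP)%:R) hG).
congr (_ * _ - _); apply: eq_bigr => l hl; by rewrite sum_ind dev_other.
Qed.

Lemma prod01 (R : realType) m (s : 'I_m -> obj -> R) (P : pred 'I_m) y :
  mixedG s -> 0 <= \prod_(l | P l) s l y <= 1.
Proof.
move=> hs; apply/andP; split; first by apply: prodr_ge0 => l _; exact: G_nonneg.
apply: prodr_ile1 => l _; apply/andP; split; first exact: G_nonneg.
case: (hs l) => h0; rewrite sum_obj; have := h0 oR; have := h0 oP; have := h0 oS.
by case: y; lra.
Qed.

Lemma caseA (R : realType) m (s : 'I_m -> obj -> R) :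
  (2 <= m)%N -> is_NE s -> (forall i, s i oS = 0) -> False.
Proof.
move=> m2 hNE h0; have [hs _] := hNE.
have m0 : (0 < m)%N by apply: leq_trans m2.
have m1 : (1 < m%:R :> R) by rewrite ltr1n.
have m2' : (2 <= m%:R :> R) by rewrite ler_nat.
have pos : forall i, 0 < exp_payoff s i.
  move=> i.
  set pi := \prod_(l | l != i) s l oP.
  have hpi : 0 <= pi <= 1 by exact: prod01.
  have uS := @U_S R m s i hs (fun l _ => h0 l); rewrite -/pi in uS.
  have hG := dev_mixed i oP hs.
  have uP : (1 - pi) / (m%:R - 1) <= U s i oP.
    rewrite U_Ex.
    have -> : (1 - pi) / (m%:R - 1) =
      Ex (deviate s i (pure R oP)) (fun c => (- (m%:R - 1)^-1) *
         \prod_(l | l != i) (c l == oP)%:R + (m%:R - 1)^-1).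
      rewrite Ex_affine // (@Ex_prodP R m _ (fun l => l != i) (fun _ y => (y == oP)%:R) hG) /pi.
      have -> : \prod_(j | j != i) \sum_y deviate s i (pure R oP) j y * (y == oP)%:R = pi.
        by apply: eq_bigr => l hl; rewrite sum_ind dev_other.
      rewrite /pi; ring.
    apply: Ex_mono; first exact: G_nonneg.
    move=> c /supp_dev [ci hl].
    have := pw_P_b R m2 ci; rewrite mulrBl mul1r mulNr addrC [_ * (m%:R - 1)^-1]mulrC.
    apply => l; case: (l =P i) => [->|/eqP ne]; first by rewrite ci oeqE.
    by apply: (noS_of (h0 l)); exact: hl.
  have vP := U_le i oP hNE; have vS := U_le i oS hNE.
  set v := exp_payoff s i in vP vS *.
  have hn : 0 < m%:R - 1 :> R by lra.
  have : (2 * m%:R - 1) * ((1 - pi) / (m%:R - 1)) + (m%:R * pi - 1) <= 2 * m%:R * v.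
    have : (2 * m%:R - 1) * ((1 - pi) / (m%:R - 1)) <= (2 * m%:R - 1) * v.
      by apply: ler_wpM2l; [lra | exact: le_trans uP vP].
    lra.
  have key : 0 < (2 * m%:R - 1) * ((1 - pi) / (m%:R - 1)) + (m%:R * pi - 1).
    have -> : (2 * m%:R - 1) * ((1 - pi) / (m%:R - 1)) + (m%:R * pi - 1)
       = (m%:R * (1 - pi) + pi * (m%:R - 1)^+2) / (m%:R - 1).
      by field; apply/eqP; lra.
    apply: divr_gt0 => //.
    have : 1 <= (m%:R - 1)^+2 :> R by rewrite expr2; nra.
    nra.
  move=> H; have : 0 < 2 * m%:R * v by lra.
  by rewrite pmulr_rgt0 //; lra.
have zs := zero_sum s m0.
have := @psumr_eq0P R _ xpredT (fun i => exp_payoff s i).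
move=> /(_ (fun i _ => ltW (pos i)) zs (Ordinal m0) isT) => e.
by have := pos (Ordinal m0); rewrite e ltxx.
Qed.

Lemma weier (R : realType) (I : finType) (P : pred I) (q : I -> R) :
  (forall i, P i -> 0 <= q i <= 1) ->
  1 - \sum_(i | P i) q i <= \prod_(i | P i) (1 - q i).
Proof.
move=> h.
pose K := fun (y1 y2 : R) => (1 - y1 <= y2) /\ (0 <= y1).
have : K (\sum_(i | P i) q i) (\prod_(i | P i) (1 - q i)).
  apply: (big_rec2 K); first by rewrite /K; split; lra.
  move=> i y1 y2 Pi [H1 H2]; have /andP [q0 q1] := h i Pi; split; last lra.
  have : (1 - q i) * (1 - y1) <= (1 - q i) * y2 by apply: ler_wpM2l; lra.
  have := mulr_ge0 q0 H2.
  nra.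
by case.
Qed.

Lemma s01 (R : realType) m (s : 'I_m -> obj -> R) l y : mixedG s -> 0 <= s l y <= 1.
Proof.
move=> hs; case: (hs l) => h0; rewrite sum_obj; have := h0 oR; have := h0 oP; have := h0 oS.
by case: y; move=> *; apply/andP; split; lra.
Qed.

Lemma sum_lin (R : realType) (I : finType) (P : pred I) (F : I -> R) a b :
  \sum_(j | P j) (a * F j + b) = a * \sum_(j | P j) F j + b * \sum_(j | P j) 1.
Proof.
rewrite big_split /= -mulr_sumr; congr (_ + _).
by rewrite mulr_sumr; apply: eq_bigr => j _; rewrite mulr1.
Qed.

Lemma count_others (R : realType) m (i0 : 'I_m) :
  \sum_(j | j != i0) (1 : R) = m%:R - 1.
Proof.
rewrite sumr_const.
have -> : #|[pred j | j != i0]| = #|predC1 i0| by apply: eq_card.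
rewrite cardC1 card_ord.
case: m i0 => [[]//|m' _]; by rewrite /= -natr1 addrK.
Qed.
Lemma c1 (R : realType) (n t : R) :
  1 <= n -> 0 <= t -> t <= 1/2 ->
  (1 - t) * (n^+2 * (2*n+1-t) + 2*(n+1)*(n-t)) <= 2*(n+1)*(n-t) -> False.
Proof.
move=> h1 h2 h3 h4.
have ha : 0 <= n - 1 by lra.
have hu : 0 <= 1/2 - t by lra.
set a := n - 1 in ha; set u := 1/2 - t in hu.
have e1 : n = 1 + a by rewrite /a; ring.
have e2 : t = 1/2 - u by rewrite /u; ring.
rewrite e1 e2 in h4.
have := mulr_ge0 ha hu; have := mulr_ge0 hu hu; have := mulr_ge0 ha ha.
have := mulr_ge0 (mulr_ge0 ha hu) hu; have := mulr_ge0 (mulr_ge0 ha ha) hu;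
have := mulr_ge0 (mulr_ge0 ha ha) ha; have := mulr_ge0 (mulr_ge0 ha ha) (mulr_ge0 hu hu).
have := mulr_ge0 (mulr_ge0 ha ha) (mulr_ge0 ha hu).
nra.
Qed.
Lemma c2 (R : realType) (n t : R) :
  1 <= n -> 1/2 <= t -> t < n ->
  (n + t) * (n^+2 * (2*n+1-t) + 2*(n+1)*(n-t)) <= 2*n*(n+1)^+2*(n-t) -> False.
Proof.
move=> h1 h2 h3 h4.
have ha : 0 <= n - 1 by lra.
have hu : 0 <= t - 1/2 by lra.
have hv : 0 <= n - t by lra.
set a := n - 1 in ha hv; set u := t - 1/2 in hu hv.
have e1 : n = 1 + a by rewrite /a; ring.
have e2 : t = 1/2 + u by rewrite /u; ring.
rewrite e1 e2 in h4.
have hv' : 0 <= a + 1/2 - u by rewrite /a /u; lra.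
have := mulr_ge0 hu hv'; have := mulr_ge0 (mulr_ge0 hu hv') ha;
have := mulr_ge0 (mulr_ge0 hu hv') (mulr_ge0 ha ha).
have := mulr_ge0 ha hu; have := mulr_ge0 ha ha; have := mulr_ge0 (mulr_ge0 ha ha) ha.
have := mulr_ge0 (mulr_ge0 ha ha) hu; have := mulr_ge0 (mulr_ge0 (mulr_ge0 ha ha) ha) hu.
nra.
Qed.
Lemma final_alg (R : realType) (n s t Q W : R) :
  1 <= n -> 0 < s -> s <= 1 -> 0 <= t -> t <= n ->
  0 <= Q -> 1 - t <= Q -> n * Q <= W ->
  n^+2 * (n - t) * Q <= (n - t)^+2 * W ->
  (1 - s/2) * W <= 1 - Q ->
  t <= n * ((n+1) * Q - 1) ->
  n^+2 * s * (n+1) <= (n^+2 - t) * (1 + t) -> False.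
Proof.
move=> h1 h2 h3 h4 h5 hQ0 h6 h7 h8 h9 h10 h11.
have hs1 : 0 <= 1 - s/2 by lra.
have hQW : (1 - s/2) * (n * Q) <= 1 - Q.
  apply: (le_trans _ h9); apply: ler_wpM2l => //.
have hn2 : 0 < n^+2 by rewrite exprn_gt0 //; lra.
have hsn : s * (n+1) <= 1 + t.
  have : n^+2 * (s * (n+1)) <= n^+2 * (1 + t).
    rewrite mulrA; apply: (le_trans h11); apply: ler_wpM2r; first lra.
    have : 0 <= t * t by nra. lra.
  by rewrite ler_pM2l.
case: (ltrP t n) => htn; last first.
  have et : t = n by apply/eqP; rewrite eq_le h5 htn.
  subst t. nra.
have hnt : 0 < n - t by lra.
have h8' : n^+2 * Q <= (n - t) * W.
  have : (n - t) * (n^+2 * Q) <= (n - t) * ((n - t) * W).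
    have -> : (n - t) * (n^+2 * Q) = n^+2 * (n - t) * Q by ring.
    have -> : (n - t) * ((n - t) * W) = (n - t)^+2 * W by ring.
    exact: h8.
  by rewrite ler_pM2l.
have hst : (1 - s/2) * (n^+2 * Q) <= (n - t) * (1 - Q).
  apply: (@le_trans _ _ ((1 - s/2) * ((n - t) * W))).
    by apply: ler_wpM2l.
  rewrite mulrCA; apply: ler_wpM2l => //; lra.
set K := n^+2 * (2*n+1-t) + 2*(n+1)*(n-t).
have hK : Q * K <= 2*(n+1)*(n-t).
  have : 0 <= n^+2 * Q by apply: mulr_ge0; lra.
  move=> hX.
  have P1 := ler_wpM2r hX hsn.
  have hn1 : 0 <= 2 * (n+1) by lra.
  have P2 := ler_wpM2l hn1 hst.
  rewrite /K. nra.
have hK0 : 0 < K.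
  have h2n : 0 < 2*n+1-t by lra.
  have := mulr_gt0 hn2 h2n.
  have : 0 < 2*(n+1)*(n-t) by apply: mulr_gt0 => //; lra.
  rewrite /K; lra.
case: (lerP t (1/2)) => ht.
  apply: (@c1 R n t) => //.
  apply: (le_trans _ hK); rewrite -/K; apply: ler_wpM2r; [exact: ltW hK0| exact: h6].
apply: (@c2 R n t) => //; first lra.
rewrite -/K.
have : (n + t) * K <= (n * (n+1) * Q) * K.
  apply: ler_wpM2r; [exact: ltW hK0| nra].
move=> H; apply: (le_trans H).
have : n * (n+1) * Q * K = n * (n+1) * (Q * K) by ring.
move=> ->.
have : 0 <= n * (n+1) by nra.
move=> H2; apply: (le_trans (ler_wpM2l H2 hK)).
rewrite expr2; lra.
Qed.

Lemma ring_aux1 (R : realType) (M a b : R) :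
  M * ((1 - b) * a) + (M / 2 * (b * a) - 1) = M * (1 - b/2) * a - 1.
Proof. by field. Qed.

Lemma eqler (R : realType) (x y : R) : x = y -> x <= y.
Proof. by move=> ->. Qed.

Lemma caseB (R : realType) m (s : 'I_m -> obj -> R) (i0 : 'I_m) :
  (2 <= m)%N -> is_NE s -> 0 < s i0 oS -> (forall j, j != i0 -> s j oS = 0) -> False.
Proof.
move=> m2 hNE hsS h0; have [hs _] := hNE.
have m0 : (0 < m)%N by apply: leq_trans m2.
have m2' : (2 <= m%:R :> R) by rewrite ler_nat.
pose n : R := m%:R - 1.
have hn1 : 1 <= n by rewrite /n; lra.
have Rm : m%:R = n + 1 by rewrite /n; ring.
pose Q := \prod_(l | l != i0) s l oP.
pose t := \sum_(l | l != i0) s l oR.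
pose Qj := fun j => \prod_(l | (l != i0) && (l != j)) s l oP.
pose W := \sum_(j | j != i0) Qj j.
pose sS := s i0 oS.
have hRP : forall l, l != i0 -> s l oP = 1 - s l oR.
  move=> l hl; case: (hs l) => _; rewrite sum_obj h0 //; lra.
have hQ0 : 0 <= Q by apply: prodr_ge0 => l _; case/andP: (s01 l oP hs).
have hQj0 : forall j, 0 <= Qj j by move=> j; apply: prodr_ge0 => l _; case/andP: (s01 l oP hs).
have ht0 : 0 <= t by apply: sumr_ge0 => l _; case/andP: (s01 l oR hs).
have htn : t <= n.
  rewrite /n -(count_others R i0); apply: ler_sum => l _; by case/andP: (s01 l oR hs).
have hweier : 1 - t <= Q.
  rewrite /Q (eq_bigr (fun l => 1 - s l oR)); last by move=> l hl; rewrite hRP.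
  apply: weier => l _; exact: s01.
have hsS1 : sS <= 1 by case/andP: (s01 i0 oS hs).
have hv0 : exp_payoff s i0 = m%:R * Q - 1.
  by rewrite -(supp hNE hsS) (@U_S R m s i0 hs h0).
have hUP : t / n <= U s i0 oP.
  have hG := dev_mixed i0 oP hs.
  rewrite U_Ex.
  have -> : t / n = Ex (deviate s i0 (pure R oP))
     (fun c => n^-1 * \sum_l (c l == oR)%:R).
    rewrite Ex_scale Ex_sum.
    rewrite (eq_bigr (fun l => deviate s i0 (pure R oP) l oR)); last first.
      by move=> l _; rewrite Ex_ind.
    rewrite (bigD1 i0) //= dev_self /pure oeqE /= add0r mulrC.
    congr (_ * _); apply: eq_bigr => l hl; by rewrite dev_other.
  apply: Ex_mono; first exact: G_nonneg.
  move=> c /supp_dev [ci hl].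
  rewrite mulrC; apply: (pw_P_a R m2 ci) => l.
  case: (l =P i0) => [->|/eqP ne]; first by rewrite ci oeqE.
  by apply: (noS_of (h0 l ne)); exact: hl.
have hvP := U_le i0 oP hNE.
have htv : t / n <= m%:R * Q - 1 by rewrite -hv0; exact: le_trans hUP hvP.
have hnp : 0 < n by lra.
have hr : s i0 oR = 0.
  case: (ltrP 0 (s i0 oR)) => hr; last by apply/le_anti/andP; split => //; case/andP: (s01 i0 oR hs).
  exfalso.
  have e := supp hNE hr.
  have hG := dev_mixed i0 oR hs.
  have : U s i0 oR <= 0.
    rewrite U_Ex -(@Ex_const R m _ 0 hG).
    apply: Ex_mono; first exact: G_nonneg.
    move=> c /supp_dev [ci hl] /=; apply: (pw_R_i0 R ci) => l.
    case: (l =P i0) => [->|/eqP ne]; first by rewrite ci oeqE.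
    by apply: (noS_of (h0 l ne)); exact: hl.
  rewrite e hv0 => hle.
  have : t / n <= 0 by lra.
  rewrite ler_pdivrMr // mul0r => ht.
  have : t = 0 by lra.
  move=> t0; rewrite t0 subr0 in hweier.
  have : m%:R * 1 <= m%:R * Q by apply: ler_wpM2l => //; lra.
  lra.
have hp : s i0 oP = 1 - sS.
  case: (hs i0) => _; rewrite sum_obj hr /sS; lra.
have hzs : \sum_(j | j != i0) exp_payoff s j = - exp_payoff s i0.
  have := zero_sum s m0; rewrite (bigD1 i0) //= => H.
  by apply/eqP; rewrite -addr_eq0 addrC H.
have hE4 : forall j, j != i0 -> m%:R * (1 - sS/2) * Qj j - 1 <= exp_payoff s j.
  move=> j ji0.
  have hG := dev_mixed j oS hs.
  apply: le_trans (U_le j oS hNE); rewrite U_Ex.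
  pose L := fun l : 'I_m => (l != i0) && (l != j).
  have Li0 : ~~ L i0 by rewrite /L eqxx.
  have i0j : i0 != j by rewrite eq_sym.
  have EQ : Ex (deviate s j (pure R oS))
      (fun c => m%:R * ((c i0 == oP)%:R * \prod_(l | L l) (c l == oP)%:R) +
         ((m%:R / 2) * ((c i0 == oS)%:R * \prod_(l | L l) (c l == oP)%:R) + (-1)))
      = m%:R * (1 - sS/2) * Qj j - 1.
    rewrite Ex_add Ex_scale Ex_affine //.
    rewrite !(@Ex_indprod R m _ i0 _ L oP hG Li0) !dev_other //.
    rewrite (@prod_dev_other R m s j (pure R oS) L oP); last by move=> l /andP [].
    rewrite hp /Qj /L /sS /=; exact: ring_aux1.
  rewrite -EQ; apply: Ex_mono; first exact: G_nonneg.
  move=> c /supp_dev [cj hl].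
  have := pw_S_j R ji0 cj.
  have H : forall l, l != i0 -> l != j -> c l != oS.
    by move=> l a b; apply: (noS_of (h0 l a)); exact: hl.
  move=> /(_ H) H2; apply: le_trans H2; apply: eqler; rewrite /L; ring.
pose b0 := 1 + t.
have hb0 : 0 < b0 by rewrite /b0; lra.
have hE5 : forall j, j != i0 -> sS * m%:R / b0 - 1 <= exp_payoff s j.
  move=> j ji0.
  have hG := dev_mixed j oR hs.
  apply: le_trans (U_le j oR hNE); rewrite U_Ex.
  pose X := \sum_(l | l != i0) deviate s j (pure R oR) l oR.
  have hX : X <= b0.
    rewrite /X /b0 /t (bigD1 j) //= dev_self /pure eqxx.
    rewrite [in X in _ <= 1 + X](bigD1 j) //=.
    have : 0 <= s j oR by case/andP: (s01 j oR hs).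
    have -> : \sum_(i | (i != i0) && (i != j)) deviate s j (pure R oR) i oR
       = \sum_(i | (i != i0) && (i != j)) s i oR.
      by apply: eq_bigr => l /andP [_ b]; rewrite dev_other.
    lra.
  have EQ : Ex (deviate s j (pure R oR))
      (fun c => (2 * m%:R / b0) * (c i0 == oS)%:R +
        ((- (m%:R / b0^+2)) * \sum_(l | l != i0) ((c i0 == oS)%:R * (c l == oR)%:R) + (-1)))
      = (2 * m%:R / b0) * sS - (m%:R / b0^+2) * (sS * X) - 1.
    have Gi0 : deviate s j (pure R oR) i0 = s i0 by apply: dev_other; rewrite eq_sym.
    rewrite Ex_add Ex_scale Ex_affine // Ex_ind // Ex_sum Gi0 -/sS.
    rewrite (eq_bigr (fun l => sS * deviate s j (pure R oR) l oR)); last first.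
      move=> l hl; rewrite Ex_pair //; last by rewrite eq_sym.
      by rewrite Gi0.
    rewrite -mulr_sumr /X; ring.
  have hsS0 : 0 <= sS by rewrite /sS; lra.
  apply: (@le_trans _ _ ((2 * m%:R / b0) * sS - (m%:R / b0^+2) * (sS * X) - 1)).
    have : (m%:R / b0^+2) * (sS * X) <= (m%:R / b0^+2) * (sS * b0).
      apply: ler_wpM2l; first by apply: divr_ge0; [lra | exact: sqr_ge0].
      by apply: ler_wpM2l.
    have -> : (m%:R / b0^+2) * (sS * b0) = sS * m%:R / b0.
      by field; apply/eqP; lra.
    have -> : 2 * m%:R / b0 * sS = 2 * (sS * m%:R / b0) by rewrite mulrC !mulrA [sS * 2]mulrC.
    lra.
  rewrite -EQ; apply: Ex_mono; first exact: G_nonneg.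
  move=> c /supp_dev [cj hl].
  have H : forall l, l != i0 -> c l != oS.
    move=> l a; case: (l =P j) => [->|/eqP b]; first by rewrite cj oeqE.
    by apply: (noS_of (h0 l a)); exact: hl.
  have := pw_R_j hb0 ji0 cj H.
  move=> H2; apply: le_trans H2; apply: eqler.
  rewrite -mulr_sumr; ring.
have hS : (m%:R * (1 - sS/2)) * W - n <= - (m%:R * Q - 1).
  have SL : \sum_(j | j != i0) (m%:R * (1 - sS/2) * Qj j - 1) = m%:R * (1 - sS/2) * W - n.
    rewrite (eq_bigr (fun j => (m%:R * (1 - sS/2)) * Qj j + (-1))) // sum_lin count_others /W /n.
    ring.
  rewrite -SL -hv0 -hzs.
  apply: ler_sum => j hj; exact: hE4.
have hRs : (sS * m%:R / b0) * n - n <= - (m%:R * Q - 1).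
  have SL : \sum_(j | j != i0) (sS * m%:R / b0 - 1) = (sS * m%:R / b0) * n - n.
    rewrite (eq_bigr (fun j => (sS * m%:R / b0) * 1 + (-1))); last by move=> *; ring.
    rewrite sum_lin count_others /n; ring.
  rewrite -SL -hv0 -hzs.
  apply: ler_sum => j hj; exact: hE5.
have hQj : forall j, j != i0 -> Q = s j oP * Qj j.
  by move=> j hj; rewrite /Q (bigD1 j).
have hW1 : n * Q <= W.
  rewrite /W /n -(count_others R i0) mulr_suml; apply: ler_sum => j hj.
  rewrite mul1r (hQj j hj); have := hQj0 j; case/andP: (s01 j oP hs) => a0 a1.
  by move=> hq; rewrite -[X in _ <= X]mul1r; apply: ler_wpM2r.
have hsumP : \sum_(j | j != i0) s j oP = n - t.
  rewrite (eq_bigr (fun j => (-1) * s j oR + 1)); last by move=> j hj; rewrite hRP //; ring.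
  by rewrite sum_lin count_others /t /n; ring.
have hW2 : n^+2 * (n - t) * Q <= (n - t)^+2 * W.
  have step : forall j, j != i0 ->
      (- (n^+2 * Q)) * s j oP + 2 * n * (n - t) * Q <= (n - t)^+2 * Qj j.
    move=> j hj; have hq := hQj j hj.
    have E : (n - t)^+2 * Qj j - ((- (n^+2 * Q)) * s j oP + 2 * n * (n - t) * Q)
      = Qj j * ((n - t) - n * s j oP)^+2 by rewrite hq; ring.
    rewrite -subr_ge0 E; apply: mulr_ge0; [exact: hQj0 | exact: sqr_ge0].
  have hsum : \sum_(j | j != i0) ((- (n^+2 * Q)) * s j oP + 2 * n * (n - t) * Q)
     <= \sum_(j | j != i0) (n - t)^+2 * Qj j by apply: ler_sum => j hj; exact: step j hj.
  rewrite sum_lin hsumP count_others -/n -mulr_sumr in hsum.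
  rewrite /W; apply: le_trans hsum; apply: eqler; ring.
have h9 : (1 - sS/2) * W <= 1 - Q.
  have : (n + 1) * ((1 - sS/2) * W) <= (n + 1) * (1 - Q).
    move: hS; rewrite Rm; nra.
  by rewrite ler_pM2l //; lra.
have h10 : t <= n * ((n+1) * Q - 1).
  move: htv; rewrite ler_pdivrMr // Rm mulrC //.
have h11 : n^+2 * sS * (n+1) <= (n^+2 - t) * (1 + t).
  have hX : (sS * m%:R / b0) * b0 = sS * m%:R by field; apply/eqP; lra.
  have h1 : n * ((sS * m%:R / b0) * n - n) <= n * (- (t / n)).
    apply: ler_wpM2l; first lra.
    apply: le_trans hRs _; lra.
  have h2 : n * (- (t / n)) = - t by field; apply/eqP; lra.
  rewrite h2 in h1.
  have h3 : (n^+2 * (sS * m%:R / b0)) * b0 <= (n^+2 - t) * b0.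
    apply: ler_wpM2r; first lra.
    move: h1; rewrite expr2; nra.
  move: h3; rewrite -mulrA hX Rm /b0 => h3.
  by rewrite -mulrA.
apply: (@final_alg R n sS t Q W) => //.
Qed.
Unset Implicit Arguments.
Theorem mainTheorem4 (R : realType) (m : nat) :
  (2 <= m)%N -> (m < 50)%N ->
  forall sigma : 'I_m -> obj -> R, is_NE sigma ->
    (2 <= #|[set i : 'I_m | (0 < sigma i oS)%R]|)%N.
Proof.
move=> m2 _ s hNE.
have [hs _] := hNE.
rewrite leqNgt; apply/negP => hlt.
have hle : (#|[set i | (0 < s i oS)%R]| <= 1)%N by rewrite -ltnS.
have zero_of : forall i, i \notin [set i | (0 < s i oS)%R] -> s i oS = 0.
  move=> i; rewrite inE -leNgt => h; apply/le_anti/andP; split => //.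
  by case/andP: (s01 i oS hs).
case: (set_0Vmem [set i | (0 < s i oS)%R]) => [E | [i0 Hi0]].
  apply: (caseA m2 hNE) => i; apply: zero_of; by rewrite E inE.
have hsS : 0 < s i0 oS by move: Hi0; rewrite inE.
apply: (caseB m2 hNE hsS) => j ji0; apply: zero_of.
apply/negP => hj.
have e := card_le1_eqP hle j i0 hj Hi0.
by move: ji0; rewrite e eqxx.
Qed.
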